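(* Suppose that both of the following hold: (i) for all positive integers $k,a$ such that neither $a$ nor $a+1$ is divisible by $k$, the Cayley digraph $\mathrm{Cay}(\mathbb{Z}_k;a,a+1)$ has two arc-disjoint hamiltonian paths; and (ii) for all positive integers $k,a$ such that $k$ is divisible by $2a+1$ and neither $a$ nor $a+1$ is divisible by $k$, the Cayley digraph $\mathrm{Cay}(\mathbb{Z}_k;-a,a+1)$ has two arc-disjoint hamiltonian paths. Then for every finite abelian group $G$ and every $2$-element generating set $\{a,b\}$ of $G$ with $a$ and $b$ nontrivial, $\mathrm{Cay}(G;a,b)$ has two arc-disjoint hamiltonian paths.
   Context: For an abelian group $G$ and $a,b\in G$, the Cayley digraph $\mathrm{Cay}(G;a,b)$ has vertex set $G$ and an arc from $v$ to $v+s$ for every $v\in G$ and $s\in\{a,b\}$. A hamiltonian path is a directed path visiting every vertex exactly once; arc-disjoint means sharing no arc. *)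

(* Defs.v *)
From HB Require Import structures.
From mathcomp Require Import all_boot all_order all_algebra.
Set Implicit Arguments. Unset Strict Implicit. Unset Printing Implicit Defensive.
Import GRing.Theory.
Local Open Scope ring_scope.

(* Cayley digraph Cay(G; a, b) on a finite abelian (additive) group G.
   Arcs are labelled by the generator used: the arc (v, c) goes from v to
   v + a if c = false and to v + b if c = true. *)
Definition cay_step (G : zmodType) (a b : G) (v : G) (c : bool) : G :=
  v + (if c then b else a).

Definition walk_verts (G : zmodType) (a b : G) (v : G) (cs : seq bool) : seq G :=
  v :: scanl (cay_step a b) v cs.

Definition walk_arcs (G : zmodType) (a b : G) (v : G) (cs : seq bool)
  : seq (G * bool) := zip (walk_verts a b v cs) cs.

Definition cay_ham_path (G : finZmodType) (a b : G) (v : G) (cs : seq bool)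
  : bool :=
  uniq (walk_verts a b v cs) && (size (walk_verts a b v cs) == #|G|)%N.

Definition two_arc_disjoint_ham_paths (G : finZmodType) (a b : G) : Prop :=
  exists (v1 : G) (cs1 : seq bool) (v2 : G) (cs2 : seq bool),
    [/\ cay_ham_path a b v1 cs1, cay_ham_path a b v2 cs2 &
        all (fun e => e \notin walk_arcs a b v2 cs2) (walk_arcs a b v1 cs1)].

Definition generates2 (G : zmodType) (a b : G) : Prop :=
  forall g : G, exists m n : int, g = a *~ m + b *~ n.

(* Main.v *)
Require Import Defs.
From mathcomp Require Import all_boot all_order all_algebra all_fingroup all_solvable.
From mathcomp Require Import zify.
Set Implicit Arguments. Unset Strict Implicit. Unset Printing Implicit Defensive.
Import GRing.Theory FinRing.Theory.
Local Open Scope ring_scope.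
Section Walk.
Variables (G : finZmodType) (a b : G).

Lemma scanl_iota (f : nat -> G) (L : nat -> bool) N k :
  (forall t, (k <= t)%N -> (t < k + N)%N -> f t.+1 = cay_step a b (f t) (L t)) ->
  scanl (cay_step a b) (f k) (map L (iota k N)) = map f (iota k.+1 N).
Proof.
elim: N k => [|N IH] k H //=.
rewrite -H ?leqnn ?addnS ?ltnS ?leq_addr //; congr cons.
apply: IH => t Ht1 Ht2; apply: H; [exact: ltnW | by rewrite addnS -addSn].
Qed.

Lemma walk_mkseq (f : nat -> G) (L : nat -> bool) N :
  (forall t, (t < N)%N -> f t.+1 = cay_step a b (f t) (L t)) ->
  walk_verts a b (f 0%N) (mkseq L N) = mkseq f N.+1.
Proof.
move=> H; rewrite /walk_verts /mkseq (scanl_iota (N:=N) (k:=0)) //.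
by move=> t _; rewrite add0n; apply: H.
Qed.

Lemma zip_iota (f : nat -> G) (L : nat -> bool) N k :
  zip (map f (iota k N.+1)) (map L (iota k N)) = map (fun t => (f t, L t)) (iota k N).
Proof. by elim: N k => [|N IH] k //=; rewrite -IH. Qed.

Lemma mk_two (f g : nat -> G) (lf lg : nat -> bool) :
  (0 < #|G|)%N ->
  (forall t, (t.+1 < #|G|)%N -> f t.+1 = f t + (if lf t then b else a)) ->
  (forall t, (t.+1 < #|G|)%N -> g t.+1 = g t + (if lg t then b else a)) ->
  (forall t s, (t < #|G|)%N -> (s < #|G|)%N -> f t = f s -> t = s) ->
  (forall t s, (t < #|G|)%N -> (s < #|G|)%N -> g t = g s -> t = s) ->
  (forall t s, (t.+1 < #|G|)%N -> (s.+1 < #|G|)%N -> f t = g s -> lf t != lg s) ->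
  two_arc_disjoint_ham_paths a b.
Proof.
move=> G0 Rf Rg If Ig D.
move: Rf Rg If Ig D; case HN: #|G| G0 => [//|N] _ Rf Rg If Ig D.
exists (f 0%N), (mkseq lf N), (g 0%N), (mkseq lg N).
have Wf : walk_verts a b (f 0%N) (mkseq lf N) = mkseq f N.+1.
  by rewrite walk_mkseq // => t Ht; apply: Rf.
have Wg : walk_verts a b (g 0%N) (mkseq lg N) = mkseq g N.+1.
  by rewrite walk_mkseq // => t Ht; apply: Rg.
split.
- rewrite /cay_ham_path Wf size_mkseq HN eqxx andbT /mkseq map_inj_in_uniq ?iota_uniq //.
  by move=> t s; rewrite !mem_iota !add0n => /andP[_ Ht] /andP[_ Hs]; apply: If.
- rewrite /cay_ham_path Wg size_mkseq HN eqxx andbT /mkseq map_inj_in_uniq ?iota_uniq //.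
  by move=> t s; rewrite !mem_iota !add0n => /andP[_ Ht] /andP[_ Hs]; apply: Ig.
apply/allP => e; rewrite /walk_arcs Wf Wg /mkseq !zip_iota.
move=> /mapP[t]; rewrite mem_iota add0n => /andP[_ Ht] ->.
apply/negP => /mapP[s]; rewrite mem_iota add0n => /andP[_ Hs] [E1 E2].
by move: (D t s Ht Hs E1); rewrite E2 eqxx.
Qed.

Lemma get_two : two_arc_disjoint_ham_paths a b ->
  exists (f g : nat -> G) (lf lg : nat -> bool),
  [/\ (forall t, (t.+1 < #|G|)%N -> f t.+1 = f t + (if lf t then b else a)),
      (forall t, (t.+1 < #|G|)%N -> g t.+1 = g t + (if lg t then b else a)),
      (forall t s, (t < #|G|)%N -> (s < #|G|)%N -> f t = f s -> t = s),
      (forall t s, (t < #|G|)%N -> (s < #|G|)%N -> g t = g s -> t = s) &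
      (forall t s, (t.+1 < #|G|)%N -> (s.+1 < #|G|)%N -> f t = g s -> lf t != lg s)].
Proof.
move=> [v1 [cs1 [v2 [cs2 [/andP[U1 /eqP S1] /andP[U2 /eqP S2] D]]]]].
set w1 := walk_verts a b v1 cs1 in U1 S1 D *.
set w2 := walk_verts a b v2 cs2 in U2 S2 D *.
have Sw1 : size w1 = (size cs1).+1 by rewrite /w1 /walk_verts /= size_scanl.
have Sw2 : size w2 = (size cs2).+1 by rewrite /w2 /walk_verts /= size_scanl.
have Rw : forall v cs t, (t < size cs)%N ->
    nth v (walk_verts a b v cs) t.+1 =
    nth v (walk_verts a b v cs) t + (if nth false cs t then b else a).
  move=> v cs t Ht; rewrite /walk_verts /= nth_scanl //.
  have -> : nth v (v :: scanl (cay_step a b) v cs) t = foldl (cay_step a b) v (take t cs).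
    by case: t Ht => [|t] Ht /=; rewrite ?take0 // nth_scanl // ltnW.
  by rewrite (take_nth false Ht) -cats1 foldl_cat.
have Aw : forall v cs t, (t < size cs)%N ->
    (nth v (walk_verts a b v cs) t, nth false cs t) \in walk_arcs a b v cs.
  move=> v cs t Ht; rewrite /walk_arcs.
  have <- : nth (v, false) (zip (walk_verts a b v cs) cs) t =
      (nth v (walk_verts a b v cs) t, nth false cs t).
    by rewrite nth_zip_cond size_zip /walk_verts /= size_scanl minnE subSnn subn1 /= Ht.
  by apply: mem_nth; rewrite size_zip /walk_verts /= size_scanl minnE subSnn subn1.
exists (fun t => nth v1 w1 t), (fun t => nth v2 w2 t),
       (fun t => nth false cs1 t), (fun t => nth false cs2 t); split.
- move=> t Ht; apply: Rw; have: (t.+1 < size w1)%N by rewrite S1.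
  by rewrite Sw1.
- move=> t Ht; apply: Rw; have: (t.+1 < size w2)%N by rewrite S2.
  by rewrite Sw2.
- move=> t s Ht Hs; move/eqP; rewrite nth_uniq //; [by move/eqP|by rewrite S1|by rewrite S1].
- move=> t s Ht Hs; move/eqP; rewrite nth_uniq //; [by move/eqP|by rewrite S2|by rewrite S2].
move=> t s Ht Hs E; apply/negP => /eqP E2.
have Ht' : (t < size cs1)%N.
  have: (t.+1 < size w1)%N by rewrite S1.
  by rewrite Sw1.
have Hs' : (s < size cs2)%N.
  have: (s.+1 < size w2)%N by rewrite S2.
  by rewrite Sw2.
move/allP: D => /(_ _ (Aw v1 cs1 t Ht')); rewrite -/w1 E E2 -/w2.
by rewrite (Aw v2 cs2 s Hs').
Qed.

End Walk.
Lemma transfer (H G : finZmodType) (a b : H) (a' b' : G) (psi : H -> G) (fl : bool) :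
  injective psi -> #|G| = #|H| -> (forall x y, psi (x + y) = psi x + psi y) ->
  psi a = (if fl then b' else a') -> psi b = (if fl then a' else b') ->
  two_arc_disjoint_ham_paths a b -> two_arc_disjoint_ham_paths a' b'.
Proof.
move=> Ipsi EG Apsi Pa Pb /get_two [f [g [lf [lg [Rf Rg If Ig D]]]]].
apply: (@mk_two _ _ _ (psi \o f) (psi \o g) (fun t => lf t (+) fl) (fun t => lg t (+) fl)).
- by rewrite EG; apply/card_gt0P; exists 0.
- move=> t Ht /=; rewrite Rf -?EG // Apsi; congr (_ + _).
  by case: (lf t); case: fl Pa Pb => /= Pa Pb; rewrite ?Pa ?Pb.
- move=> t Ht /=; rewrite Rg -?EG // Apsi; congr (_ + _).
  by case: (lg t); case: fl Pa Pb => /= Pa Pb; rewrite ?Pa ?Pb.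
- by move=> t s Ht Hs /= /Ipsi; apply: If; rewrite -EG.
- by move=> t s Ht Hs /= /Ipsi; apply: Ig; rewrite -EG.
move=> t s Ht Hs /= /Ipsi E; have := D t s; rewrite -EG => /(_ Ht Hs E) {Pa Pb}.
by case: (lf t); case: (lg s); case: fl.
Qed.

Section Grp.
Variable G : finZmodType.
Implicit Types x y c : G.

Lemma mulrn_mod x i : x *+ (i %% #[x]%g) = x *+ i.
Proof. by rewrite -!zmodXgE expg_mod_order. Qed.

Lemma mulrn_eqmod x i j : (x *+ i == x *+ j) = (i == j %[mod #[x]%g]).
Proof. by rewrite -!zmodXgE eq_expg_mod_order. Qed.

Lemma mulrn_order x : x *+ #[x]%g = 0.
Proof. by rewrite -zmodXgE expg_order. Qed.

Lemma intmul_nat x (z : int) : exists k, x *~ z = x *+ k.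
Proof.
case: z => k; first by exists k.
exists (#[x]%g * k.+1 - k.+1)%N; rewrite NegzE mulrNz; apply/eqP.
rewrite eq_sym -addr_eq0 -mulrnDr subnK ?leq_pmull ?order_gt0 //.
by rewrite mulrnA mulrn_order mul0rn.
Qed.

Lemma inH_add c x y : x \in <[c]>%g -> y \in <[c]>%g -> x + y \in <[c]>%g.
Proof. exact: groupM. Qed.
Lemma inH_opp c x : x \in <[c]>%g -> - x \in <[c]>%g.
Proof. by move=> Hx; rewrite -zmodVgE groupV. Qed.
Lemma inH_mulrn c x k : x \in <[c]>%g -> x *+ k \in <[c]>%g.
Proof. by move=> Hx; rewrite -zmodXgE groupX. Qed.
Lemma inH_c c k : c *+ k \in <[c]>%g.
Proof. by rewrite -zmodXgE mem_cycle. Qed.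
Lemma inH_P c x : x \in <[c]>%g -> exists k, x = c *+ k.
Proof. by move/cycleP => [k ->]; exists k. Qed.

Lemma coords (a c : G) :
  (forall g : G, exists i j : nat, g = a *+ i + c *+ j) ->
  exists n l : nat, [/\ (0 < n)%N, a *+ n = c *+ l, #|G| = (n * #[c]%g)%N &
     forall i i' j j', (i < n)%N -> (i' < n)%N ->
       a *+ i + c *+ j = a *+ i' + c *+ j' -> i = i'].
Proof.
move=> Hgen.
have ex : exists i, (0 < i)%N && (a *+ i \in <[c]>%g).
  exists #[a]%g; rewrite order_gt0 mulrn_order /=; exact: (group1 <[c]>%G).
case: (ex_minnP ex) => n /andP[n0 Hn] Hmin.
have [l Hl] := inH_P Hn.
have key : forall k, (a *+ k \in <[c]>%g) = (n %| k)%N.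
  move=> k; rewrite {1}(divn_eq k n) mulrnDr /dvdn.
  have Hq : a *+ (k %/ n * n)%N \in <[c]>%g by rewrite mulnC mulrnA inH_mulrn.
  apply/idP/eqP.
  - move=> Hs; have Hr : a *+ (k %% n)%N \in <[c]>%g.
      by have := inH_add (inH_opp Hq) Hs; rewrite addKr.
    case E: (k %% n)%N Hr => [//|r] Hr.
    by have := Hmin _ (introT andP (conj (ltn0Sn r) Hr)); rewrite -E leqNgt ltn_pmod.
  - by move=> ->; rewrite mulr0n addr0.
have dist : forall i i' j j', (i < n)%N -> (i' < n)%N ->
    a *+ i + c *+ j = a *+ i' + c *+ j' -> i = i'.
  move=> i i' j j'.
  wlog le : i i' j j' / (i <= i')%N.
    move=> W Hi Hi' E; case: (leqP i i') => H; first exact: (W i i' j j' H Hi Hi' E).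
    by symmetry; exact: (W i' i j' j (ltnW H) Hi' Hi (esym E)).
  move=> Hi Hi' E.
  have E2 : a *+ (i' - i) = c *+ j - c *+ j'.
    apply/eqP; rewrite eq_sym subr_eq; apply/eqP.
    apply: (@addrI _ (a *+ i)); rewrite E addrA -mulrnDr subnKC //.
  have : a *+ (i' - i) \in <[c]>%g by rewrite E2 inH_add ?inH_opp ?inH_c.
  rewrite key; case E3: (i' - i)%N => [|d].
    by move=> _; apply/eqP; rewrite eqn_leq le /= -subn_eq0 E3.
  move/dvdn_leq => /(_ (ltn0Sn d)); rewrite -E3 => H.
  have : (i' - i < n)%N by apply: leq_ltn_trans Hi'; exact: leq_subr.
  by rewrite ltnNge H.
set m := #[c]%g.
have m0 : (0 < m)%N by exact: order_gt0.
pose h := fun p : 'I_n * 'I_m => a *+ p.1 + c *+ p.2.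
have Hinj : injective h.
  move=> [i j] [i' j']; rewrite /h /= => E.
  have Ei := dist _ _ _ _ (ltn_ord i) (ltn_ord i') E.
  have Ei' : i = i' by apply: val_inj.
  subst i'; move/addrI/eqP: E; rewrite mulrn_eqmod -/m !modn_small // => /eqP Ej.
  by congr (_, _); apply: val_inj.
have Hsurj : forall g, g \in h @: setT.
  move=> g; have [i [j ->]] := Hgen g; apply/imsetP.
  exists (Ordinal (ltn_pmod i n0), Ordinal (ltn_pmod (l * (i %/ n) + j)%N m0)) => //.
  rewrite /h /= mulrn_mod {1}(divn_eq i n) !mulrnDr [(i %/ n * n)%N]mulnC mulrnA Hl -mulrnA.
  by rewrite [c *+ (l * _) + _]addrC -addrA.
exists n, l; split => //.
rewrite -cardsT.
have -> : [set: G] = h @: setT by apply/setP => g; rewrite in_setT Hsurj.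
by rewrite card_imset // cardsT card_prod !card_ord.
Qed.
End Grp.
Definition onerow (m K K' be be' : nat) (F F' : nat -> nat) (L L' : nat -> bool) : Prop :=
 [/\ (forall t, t.+1 < m -> F t.+1 = F t + K + L t %[mod m])%N,
     (forall t, t.+1 < m -> F' t.+1 = F' t + K' + L' t %[mod m])%N,
     (forall t s, t < m -> s < m -> F t = F s %[mod m] -> t = s)%N,
     (forall t s, t < m -> s < m -> F' t = F' s %[mod m] -> t = s)%N &
     (forall t s, t.+1 < m -> s.+1 < m -> F t + be = F' s + be' %[mod m] -> L t != L' s)%N].

Lemma step_div1 n T : (T %% n < n.-1 -> T.+1 %/ n = T %/ n /\ T.+1 %% n = (T %% n).+1)%N.
Proof.
move=> H; have n0 : (0 < n)%N by case: n H.
have Hr : ((T %% n).+1 < n)%N by move: H; case: n n0 => // n' _; rewrite /= ltnS.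
by rewrite {1 3}(divn_eq T n) -addnS divnMDl // modnMDl (divn_small Hr) addn0 (modn_small Hr).
Qed.

Lemma step_div2 n T : (0 < n -> T %% n = n.-1 -> T.+1 %/ n = (T %/ n).+1 /\ T.+1 %% n = 0)%N.
Proof.
move=> n0 H; have E : T.+1 = ((T %/ n).+1 * n)%N.
  by rewrite {1}(divn_eq T n) H -addnS prednK // mulSn [(n + _)%N]addnC.
by rewrite E mulnK // modnMl.
Qed.

Section Lift.
Variables (G : finZmodType) (a b : G).

Lemma linD (c : G) x y x' y' :
  c *+ x + a *+ y + (c *+ x' + a *+ y') = c *+ (x + x') + a *+ (y + y').
Proof. by rewrite !mulrnDr addrACA. Qed.

Lemma lift (n m l be : nat) F F' L L' :
  (0 < n)%N -> #[b - a]%g = m -> #|G| = (n * m)%N -> a *+ n = (b - a) *+ l ->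
  (forall i i' j j', (i < n)%N -> (i' < n)%N ->
     a *+ i + (b - a) *+ j = a *+ i' + (b - a) *+ j' -> i = i') ->
  (be < n)%N ->
  onerow m (l + be) (l + (n.-1 - be)) be (n.-1 - be) F F' L L' ->
  two_arc_disjoint_ham_paths a b.
Proof.
set c := b - a => n0 Hm HG Hl dist ben [RF RF' IF IF' DF].
have m0 : (0 < m)%N by rewrite -Hm order_gt0.
have stepE : forall x : bool, (if x then b else a) = c *+ x + a *+ 1.
  by case; rewrite /= ?mulr0n ?mulr1n ?add0r // /c subrK.
have cmod : forall x y, (x = y %[mod m])%N -> c *+ x = c *+ y.
  by move=> x y E; apply/eqP; rewrite mulrn_eqmod Hm; apply/eqP.
have cmod' : forall x y, c *+ x = c *+ y -> (x = y %[mod m])%N.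
  by move=> x y /eqP; rewrite mulrn_eqmod Hm => /eqP.
have coord : forall x y x' y', (y < n)%N -> (y' < n)%N ->
    c *+ x + a *+ y = c *+ x' + a *+ y' -> y = y' /\ (x = x' %[mod m])%N.
  move=> x y x' y' Hy Hy' E.
  have Ey : y = y' by apply: (dist y y' x x') => //; rewrite addrC E addrC.
  by subst y'; split => //; apply: cmod'; apply: (addIr (a *+ y)).
have ltm : forall T, (T < n * m)%N -> (T %/ n < m)%N.
  by move=> T HT; rewrite ltn_divLR // mulnC.
have lti : forall T, (T %% n < n)%N by move=> T; rewrite ltn_pmod.
pose f T := c *+ (F (T %/ n) + minn (T %% n) be)%N + a *+ (T %% n)%N.
pose g T := c *+ (F' (T %/ n) + (T %% n - be))%N + a *+ (T %% n)%N.
pose lf T := if (T %% n < n.-1)%N then (T %% n < be)%N else L (T %/ n)%N.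
pose lg T := if (T %% n < n.-1)%N then (be <= T %% n)%N else L' (T %/ n)%N.
have lastP : forall T, ~~ (T %% n < n.-1)%N -> (T %% n = n.-1)%N.
  move=> T; rewrite -leqNgt => H; apply/eqP; rewrite eqn_leq H andbT.
  by rewrite -ltnS prednK.
apply: (@mk_two _ _ _ f g lf lg); rewrite ?HG.
- by rewrite muln_gt0 n0.
- move=> T HT; rewrite /f /lf stepE; case: ifP => Hi.
  + have [-> ->] := step_div1 Hi.
    rewrite linD; congr (c *+ _ + a *+ _); last by rewrite addn1.
    by case: ltnP => H /=; rewrite -addnA; congr (_ + _); lia.
  + have Hi' := lastP _ (negbT Hi); have [E1 E2] := step_div2 n0 Hi'.
    rewrite E1 E2 linD mulr0n addr0 min0n addn0 Hi' addn1 prednK // Hl -mulrnDr.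
    apply: cmod; rewrite (RF _ _); last by rewrite -E1 ltm.
    have -> : minn n.-1 be = be by apply/minn_idPr; rewrite -ltnS prednK.
    by congr (_ %% m)%N; lia.
- move=> T HT; rewrite /g /lg stepE; case: ifP => Hi.
  + have [-> ->] := step_div1 Hi.
    rewrite linD; congr (c *+ _ + a *+ _); last by rewrite addn1.
    by case: leqP => H /=; rewrite -addnA; congr (_ + _); lia.
  + have Hi' := lastP _ (negbT Hi); have [E1 E2] := step_div2 n0 Hi'.
    rewrite E1 E2 linD mulr0n addr0 sub0n addn0 Hi' addn1 prednK // Hl -mulrnDr.
    apply: cmod; rewrite (RF' _ _); last by rewrite -E1 ltm.
    by congr (_ %% m)%N; lia.
- move=> T S HT HS /coord [//|//|Ei Ej].
  move: Ej; rewrite Ei => /eqP; rewrite eqn_modDr => /eqP /IF E.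
  by rewrite (divn_eq T n) (divn_eq S n) E ?ltm // Ei.
- move=> T S HT HS /coord [//|//|Ei Ej].
  move: Ej; rewrite Ei => /eqP; rewrite eqn_modDr => /eqP /IF' E.
  by rewrite (divn_eq T n) (divn_eq S n) E ?ltm // Ei.
move=> T S HT HS /coord [//|//|Ei Ej].
rewrite /lf /lg -Ei; case: ifP => Hi; first by case: ltnP.
have Hi' := lastP _ (negbT Hi).
have Emin : minn (T %% n) be = be by apply/minn_idPr; rewrite Hi' -ltnS prednK.
apply: DF; [by rewrite -(step_div2 n0 Hi').1 ltm| |].
  by rewrite -(step_div2 n0 (etrans (esym Ei) Hi')).1 ltm.
by move: Ej; rewrite Emin -Ei Hi'.
Qed.
End Lift.
Section NatFacts.
Local Open Scope nat_scope.

Lemma mod_dvd_down g m x y : g %| m -> x = y %[mod m] -> x = y %[mod g].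
Proof. by move=> Hg E; rewrite -(modn_dvdm x Hg) -(modn_dvdm y Hg) E. Qed.

Lemma modD_dvd g x y : g %| y -> (x + y) %% g = x %% g.
Proof. by move/dvdnP=> [k ->]; rewrite addnC modnMDl. Qed.

Lemma small_eqmod g x y : x < g -> y < g -> x = y %[mod g] -> x = y.
Proof. by move=> Hx Hy; rewrite !modn_small. Qed.

Lemma kinj m K i i' : 0 < m ->
  i < m %/ gcdn K m -> i' < m %/ gcdn K m -> i * K = i' * K %[mod m] -> i = i'.
Proof.
set g := gcdn K m; set r := m %/ g => m0.
have g0 : 0 < g by rewrite gcdn_gt0 m0 orbT.
have Hm : m = r * g by rewrite divnK // dvdn_gcdr.
have HK : K = K %/ g * g by rewrite divnK // dvdn_gcdl.
have cop : coprime r (K %/ g).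
  rewrite /coprime -(eqn_pmul2r g0) mul1n muln_gcdl -Hm -HK gcdnC.
  by [].
wlog le : i i' / i <= i'.
  move=> W Hi Hi' E; case: (leqP i i') => H; first exact: W.
  by symmetry; apply: W => //; exact: ltnW.
move=> Hi Hi' /esym /eqP; rewrite eqn_mod_dvd ?leq_mul2r ?le ?orbT // -mulnBl.
rewrite {1}Hm {1}HK mulnA dvdn_pmul2r // Gauss_dvdl // => Hd.
have Hlt : i' - i < r by apply: leq_ltn_trans Hi'; exact: leq_subr.
move: Hd Hlt; case E: (i' - i) => [|d] Hd Hlt.
  by apply/eqP; rewrite eqn_leq le -subn_eq0 E.
by have := dvdn_leq (ltn0Sn d) Hd; rewrite leqNgt Hlt.
Qed.

Lemma onerow_even m K be : 0 < m -> 0 < K -> 0 < be ->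
  exists F F' L L', onerow m K K.-1 be be.-1 F F' L L'.
Proof.
move=> m0 K0 be0.
set g := gcdn K m; set r := m %/ g.
have g0 : 0 < g by rewrite gcdn_gt0 m0 orbT.
have Hm : m = r * g by rewrite divnK // dvdn_gcdr.
have HK : K = K %/ g * g by rewrite divnK // dvdn_gcdl.
have r0 : 0 < r by move: m0; rewrite Hm muln_gt0 => /andP[].
have rK : r * K = m * (K %/ g) by rewrite {1}HK Hm mulnA mulnAC.
have gK : g %| K by exact: dvdn_gcdl.
have gm : g %| m by exact: dvdn_gcdr.
have ltu : forall t, t < m -> t %/ r < g by move=> t Ht; rewrite ltn_divLR // mulnC -Hm.
have lti : forall t, t %% r < r by move=> t; rewrite ltn_pmod.
have lastP : forall t, ~~ (t %% r < r.-1) -> t %% r = r.-1.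
  move=> t; rewrite -leqNgt => H; apply/eqP; rewrite eqn_leq H andbT.
  by rewrite -ltnS prednK.
have rKmod : forall x, x + r * K = x %[mod m] by move=> x; rewrite rK addnC mulnC modnMDl.
have rKmod' : forall x, r * K + x = x %[mod m] by move=> x; rewrite addnC rKmod.
have modg : forall x i, x + i * K = x %[mod g].
  by move=> x i; rewrite modD_dvd // dvdn_mull.
exists (fun t => t %/ r + t %% r * K), (fun t => t %% r * K + (g.-1 - t %/ r).+1),
       (fun t => t %% r == r.-1), (fun t => t %% r != r.-1).
have modS : forall x y, x.+1 = y.+1 %[mod m] -> x = y %[mod m].
  by move=> x y; rewrite -(addn1 x) -(addn1 y) => /eqP; rewrite eqn_modDr => /eqP.
have eR : r * K = r.-1 * K + K by rewrite -{1}(prednK r0) mulSn addnC.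
have gpred : forall u, g.-1 - u < g.
  by move=> u; apply: leq_ltn_trans (leq_subr _ _) _; rewrite prednK.
split.
- move=> t Ht /=; case: (ltnP (t %% r) r.-1) => Hi.
  + have [-> ->] := step_div1 Hi; rewrite (ltn_eqF Hi) addn0 mulSn.
    by congr (_ %% m); lia.
  + have Hi' : t %% r = r.-1 by apply/eqP; rewrite eqn_leq Hi -ltnS prednK // lti.
    have [E1 E2] := step_div2 r0 Hi'; rewrite E1 E2 Hi' eqxx.
    have -> : t %/ r + r.-1 * K + K + true = (t %/ r).+1 + 0 * K + r * K by rewrite eR /=; lia.
    by rewrite rKmod.
- move=> t Ht /=; case: (ltnP (t %% r) r.-1) => Hi.
  + have [-> ->] := step_div1 Hi; rewrite (ltn_eqF Hi) mulSn /=.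
    by congr (_ %% m); lia.
  + have Hi' : t %% r = r.-1 by apply/eqP; rewrite eqn_leq Hi -ltnS prednK // lti.
    have [E1 E2] := step_div2 r0 Hi'; rewrite E1 E2 Hi' eqxx /=.
    have Hu : (t %/ r).+1 < g by rewrite -E1 ltu.
    have -> : r.-1 * K + (g.-1 - t %/ r).+1 + K.-1 + 0 =
              0 * K + (g.-1 - (t %/ r).+1).+1 + r * K by rewrite eR; lia.
    by rewrite rKmod.
- move=> t s Ht Hs /= E.
  have Eu : t %/ r = s %/ r.
    apply: (small_eqmod (ltu _ Ht) (ltu _ Hs)).
    by have := mod_dvd_down gm E; rewrite modg [in RHS]modg.
  move: E; rewrite Eu => /eqP; rewrite eqn_modDl => /eqP E'.
  have Ei := kinj m0 (lti t) (lti s) E'.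
  by rewrite (divn_eq t r) (divn_eq s r) Eu Ei.
- move=> t s Ht Hs /=; rewrite !addnS => /modS E.
  have Eu' : g.-1 - t %/ r = g.-1 - s %/ r.
    apply: (small_eqmod (gpred _) (gpred _)).
    by have := mod_dvd_down gm E; rewrite addnC modg [in RHS]addnC [in RHS]modg.
  have Eu : t %/ r = s %/ r.
    by have := ltu _ Ht; have := ltu _ Hs; move: Eu'; clear; lia.
  move: E; rewrite Eu' => /eqP; rewrite eqn_modDr => /eqP E'.
  have Ei := kinj m0 (lti t) (lti s) E'.
  by rewrite (divn_eq t r) (divn_eq s r) Eu Ei.
move=> t s Ht Hs /= E.
have E2 : t %/ r + t %% r * K = s %% r * K + (g.-1 - s %/ r) %[mod m].
  have e1 : t %/ r + t %% r * K + be = (t %/ r + t %% r * K).+1 + be.-1.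
    by rewrite addSn -addnS prednK.
  have e2 : s %% r * K + (g.-1 - s %/ r).+1 + be.-1 =
            (s %% r * K + (g.-1 - s %/ r)).+1 + be.-1 by rewrite addnS.
  by move: E; rewrite e1 e2 => /eqP; rewrite eqn_modDr => /eqP /modS.
have Eu : t %/ r = g.-1 - s %/ r.
  apply: (small_eqmod (ltu _ (ltnW Ht)) (gpred _)).
  by have := mod_dvd_down gm E2; rewrite modg [in RHS]addnC [in RHS]modg.
move: E2; rewrite -Eu addnC => /eqP; rewrite eqn_modDr => /eqP E'.
have Ei := kinj m0 (lti t) (lti s) E'.
by rewrite Ei; case: (s %% r == r.-1).
Qed.
End NatFacts.
Lemma onerow_m2 K be : exists F F' L L', onerow 2 K K be be F F' L L'.
Proof.
exists id, S, (fun _ => ~~ odd K), (fun _ => ~~ odd K); split => /=.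
- by case=> // _; rewrite !modn2 /= oddD; case: (odd K).
- by case=> // _; rewrite !modn2 /= oddD; case: (odd K).
- by move=> t s Ht Hs; apply: small_eqmod.
- by move=> t s Ht Hs; rewrite -(addn1 t) -(addn1 s) => /eqP; rewrite eqn_modDr => /eqP;
     apply: small_eqmod.
- by case=> // [] [] // _ _; rewrite !modn2 /= oddD; case: (odd be).
Qed.

Lemma mulrn_modq (G : finZmodType) (s : G) q x : s *+ q = 0 -> s *+ (x %% q)%N = s *+ x.
Proof. by move=> H; rewrite {2}(divn_eq x q) mulrnDr mulnC mulrnA H mul0rn add0r. Qed.

Lemma val_addZp k (x y : 'Z_k) : val (x + y) = ((val x + val y) %% (Zp_trunc k).+2)%N.
Proof. by []. Qed.

Lemma val_addZp' k (x y : 'Z_k) : (1 < k)%N -> val (x + y) = ((val x + val y) %% k)%N.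
Proof. by move=> k1; rewrite val_addZp; congr (_ %% _)%N; exact: Zp_cast. Qed.

Lemma onerow_hyp m K be : (1 < m)%N ->
  two_arc_disjoint_ham_paths (K%:R : 'Z_m) (K.+1%:R) ->
  exists F F' L L', onerow m K K be be F F' L L'.
Proof.
move=> m1 /get_two [f [g [lf [lg [Rf Rg If Ig D]]]]].
have Em : (Zp_trunc m).+2 = m := Zp_cast m1.
have Cm : #|'Z_m| = m by rewrite card_ord.
have ltv : forall x : 'Z_m, (val x < m)%N.
  by move=> x; apply: (leq_trans (ltn_ord x)); rewrite Em.
have stepv : forall (x : 'Z_m) (c : bool),
    (val (x + (if c then K.+1%:R else K%:R))%R = val x + K + c %[mod m])%N.
  move=> x c; rewrite val_addZp' // modn_mod.
  have Vn : forall n, val (n%:R : 'Z_m) = (n %% m)%N := fun n => val_Zp_nat m1 n.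
  by case: c; rewrite Vn /= modnDmr ?addn0 ?addn1 ?addnS.
have vinj : forall x y : 'Z_m, (val x = val y %[mod m])%N -> x = y.
  by move=> x y; rewrite !modn_small // => /val_inj.
exists (fun t => val (f t)), (fun t => val (g t)), lf, lg; split.
- by move=> t Ht; rewrite Rf ?Cm // stepv.
- by move=> t Ht; rewrite Rg ?Cm // stepv.
- by move=> t s Ht Hs /vinj /If; apply; rewrite Cm.
- by move=> t s Ht Hs /vinj /Ig; apply; rewrite Cm.
by move=> t s Ht Hs /eqP; rewrite eqn_modDr => /eqP /vinj /D; apply; rewrite Cm.
Qed.

Lemma transfer_cyc (G : finZmodType) (s x y : G) (k a' : nat) (fl : bool) :
  (1 < k)%N -> #[s]%g = k -> #|G| = k ->
  - (s *+ a') = (if fl then y else x) -> s *+ a'.+1 = (if fl then x else y) ->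
  two_arc_disjoint_ham_paths (- (a'%:R) : 'Z_k) (a'.+1%:R) -> two_arc_disjoint_ham_paths x y.
Proof.
move=> k1 Hs HG Ha Hb.
have Ek : (Zp_trunc k).+2 = k := Zp_cast k1.
have sk : s *+ (Zp_trunc k).+2 = 0 by rewrite Ek -Hs mulrn_order.
have ltv : forall j : 'Z_k, (val j < k)%N.
  by move=> j; apply: (leq_trans (ltn_ord j)); rewrite Ek.
pose psi := fun j : 'Z_k => s *+ val j.
have Apsi : forall u v, psi (u + v) = psi u + psi v.
  by move=> u v; rewrite /psi val_addZp mulrn_modq // mulrnDr.
have Vn : forall n, val (n%:R : 'Z_k) = (n %% k)%N := fun n => val_Zp_nat k1 n.
have Pn : forall n, psi (n%:R) = s *+ n.
  by move=> n; rewrite /psi Vn -Hs mulrn_mod.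
have P0 : psi 0 = 0 by rewrite /psi /= mulr0n.
have Popp : forall u, psi (- u) = - psi u.
  by move=> u; apply/eqP; rewrite -addr_eq0 -Apsi addNr P0.
apply: (@transfer _ _ _ _ _ _ psi fl) => //.
- move=> u v; rewrite /psi => /eqP; rewrite mulrn_eqmod Hs !modn_small // => /eqP.
  exact: val_inj.
- by rewrite card_ord Ek.
- by rewrite Popp Pn.
- by rewrite Pn.
Qed.
Theorem mainTheorem11 :
  (forall k a : nat, (0 < k)%N -> (0 < a)%N ->
     ~~ (k %| a)%N -> ~~ (k %| a.+1)%N ->
     two_arc_disjoint_ham_paths (a%:R : 'Z_k) (a.+1%:R : 'Z_k)) ->
  (forall k a : nat, (0 < k)%N -> (0 < a)%N -> (a.*2.+1 %| k)%N ->
     ~~ (k %| a)%N -> ~~ (k %| a.+1)%N ->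
     two_arc_disjoint_ham_paths (- (a%:R) : 'Z_k) (a.+1%:R : 'Z_k)) ->
  forall (G : finZmodType) (a b : G),
    generates2 a b -> a != b -> a != 0 -> b != 0 ->
    two_arc_disjoint_ham_paths a b.
Proof.
move=> Hi Hii G a b Hgen Hab Ha Hb.
pose c := b - a.
have Eb : b = a + c by rewrite /c addrC subrK.
have Hgen' : forall g : G, exists i j : nat, g = a *+ i + c *+ j.
  move=> g; have [u [v ->]] := Hgen g.
  have [i Ei] := intmul_nat a (u + v); have [j Ej] := intmul_nat c v.
  by exists i, j; rewrite -Ei -Ej {1}Eb mulrzDl mulrzDr addrA.
have [n [l [n0 Hl HG dist]]] := coords Hgen'.
have c0 : c != 0 by rewrite /c subr_eq0 eq_sym.
have m1 : (1 < #[c]%g)%N.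
  have c1 : c != 1%g := c0.
  by rewrite ltn_neqAle eq_sym order_eq1 c1 order_gt0.
set m := #[c]%g in HG m1.
have m0 : (0 < m)%N by apply: ltnW.
have cz : forall x, (m %| x)%N -> c *+ x = 0.
  by move=> x /dvdnP [q ->]; rewrite mulnC mulrnA mulrn_order mul0rn.
case: (boolP (odd n)) => On.
-
  have En : n = (n./2).*2.+1 by rewrite -[LHS]odd_double_half On add1n.
  set be := n./2 in En.
  have ben : (be < n)%N by rewrite En -addnn ltnS leq_addr.
  have Eb' : (n.-1 - be)%N = be by rewrite En -addnn /= addnK.
  set K := (l + be)%N.
  have finish : forall F F' L L', onerow m K K be be F F' L L' ->
      two_arc_disjoint_ham_paths a b.
    move=> F F' L L' O.
    by apply: (@lift _ a b n m l be F F' L L') => //; rewrite Eb'.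
  case: (eqVneq m 2) => [m2|m2].
    by have [F [F' [L [L' O]]]] := onerow_m2 K be; apply: (finish F F' L L'); rewrite m2.
  case: (boolP ((m %| K) || (m %| K.+1))%N) => Hdiv; last first.
    move: Hdiv; rewrite negb_or => /andP[HK1 HK2].
    have K0 : (0 < K)%N by move: HK1; case: (K) => //; rewrite dvdn0.
    have [F [F' [L [L' O]]]] := onerow_hyp be m1 (Hi m K m0 K0 HK1 HK2).
    exact: (finish F F' L L').
  have m3 : (2 < m)%N by rewrite ltn_neqAle eq_sym m2 m1.
  pose s := a + b.
  have Es : s = a *+ 2 + c by rewrite /s Eb addrA mulr2n.
  have key : s *+ be + a = c *+ K.
    rewrite Es mulrnDl -mulrnA -addrA [c *+ be + a]addrC addrA -mulrSr mul2n -En Hl.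
    by rewrite -mulrnDr.
  have key2 : s *+ be + b = c *+ K.+1 by rewrite Eb addrA key mulrSr.
  have fin2 : forall fl : bool, - (s *+ be) = (if fl then b else a) ->
      s *+ be.+1 = (if fl then a else b) -> two_arc_disjoint_ham_paths a b.
    move=> fl E1 E2.
    have [sa sb] : a \in <[s]>%g /\ b \in <[s]>%g.
      by case: fl E1 E2 => /= <- <-; split; rewrite ?inH_opp ?inH_c.
    have cS : c \in <[s]>%g by rewrite /c inH_add ?inH_opp.
    have Sall : [set: G] = <[s]>%g.
      apply/setP => g; rewrite in_setT; have [i [j ->]] := Hgen' g.
      by rewrite inH_add ?inH_mulrn.
    have Hs : #[s]%g = (n * m)%N by rewrite /order -Sall cardsT HG.
    have be0 : (0 < be)%N.
      case: (posnP be) => // Hbe0; move: E1 E2; rewrite Hbe0 mulr0n oppr0.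
      by case: fl => /= Hx _; [move: Hb | move: Ha]; rewrite -Hx eqxx.
    have nm : (n < n * m)%N by rewrite -{1}(muln1 n) ltn_pmul2l.
    apply: (transfer_cyc (s:=s) (k := (n * m)%N) (a' := be) (fl := fl)) => //.
      by move: n0 nm; clear; lia.
    apply: Hii.
    - by move: n0 nm; clear; lia.
    - exact: be0.
    - by rewrite -En dvdn_mulr.
    - by rewrite gtnNdvd // (ltn_trans ben nm).
    - by rewrite gtnNdvd // (leq_ltn_trans ben nm).
  case/orP: Hdiv => Hd.
  + have E1 : - (s *+ be) = a.
      by apply/eqP; rewrite eq_sym -addr_eq0 addrC key cz.
    apply: (fin2 false E1); rewrite mulrSr -[s *+ be]opprK E1 /s /=.
    by rewrite addKr.
  + have E1 : - (s *+ be) = b.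
      by apply/eqP; rewrite eq_sym -addr_eq0 addrC key2 cz.
    apply: (fin2 true E1); rewrite mulrSr -[s *+ be]opprK E1 /s /=.
    by rewrite addrC addrK.
-
  have En : n = (n./2).*2 by rewrite -[LHS]odd_double_half (negbTE On) add0n.
  set be := n./2 in En.
  have be0 : (0 < be)%N by move: n0; rewrite En double_gt0.
  have ben : (be < n)%N by rewrite En -addnn -{1}(addn0 be) ltn_add2l.
  have Eb' : (n.-1 - be)%N = be.-1 by rewrite En -addnn; lia.
  have K0 : (0 < l + be)%N by rewrite addn_gt0 be0 orbT.
  have [F [F' [L [L' O]]]] := onerow_even m0 K0 be0.
  apply: (@lift _ a b n m l be F F' L L') => //.
  have -> : (l + (n.-1 - be) = (l + be).-1)%N by rewrite Eb'; lia.
  by rewrite Eb'.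
Qed.
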